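(* Let $p\geq1$, let $G$ be a discrete group with identity $e$, let $a\in G$, and let $\mu$ be a left Haar measure on $G$ with $\mu(\{e\})\geq 1$. Let $(\gamma_n)_n$ be an unbounded sequence of non-negative integers and let $w:G\to(0,\infty)$ be a bounded function. Suppose there are a finite nonempty set $F\subseteq G$ and $N>0$ such that $a^{\gamma_n}F\cap F=\varnothing$ for all $n\geq N$ and $$\beta:=\inf\Big\{\prod_{k=1}^{\gamma_n}w(a^k t):\ n\geq N,\ t\in F\Big\}>0.$$ Then the set $$\Lambda:=\big\{f\in L^p(G,\mu):\ \|T_{a,w,p}^{\gamma_n}f-\chi_F\|_p\geq\mu(F)^{1/p}\ \text{ for all } n\geq N\big\}$$ is not $\sigma$-porous in $L^p(G,\mu)$.
   Context: For $a\in G$ and a bounded weight $w:G\to(0,\infty)$, the weighted translation operator $T_{a,w,p}:L^p(G,\mu)\to L^p(G,\mu)$ is $(T_{a,w,p}f)(x)=w(x)\,f(a^{-1}x)$; $T_{a,w,p}^n$ denotes its $n$-th power ($T^0=I$). Porosity: Let $X$ be a metric space and $0<\lambda<1$. A set $E\subseteq X$ is $\lambda$-porous at $x\in E$ if for each $\delta>0$ there is $y\in B(x;\delta)\setminus\{x\}$ with $B(y;\lambda\, d(x,y))\cap E=\varnothing$; $E$ is $\lambda$-porous if it is $\lambda$-porous at each of its points; $E$ is $\sigma$-$\lambda$-porous if it is a countable union of $\lambda$-porous subsets of $X$. A set is called $\sigma$-porous if it is $\sigma$-$\lambda$-porous for some $\lambda\in(0,1)$; ''not $\sigma$-porous'' means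 not $\sigma$-$\lambda$-porous for any $\lambda\in(0,1)$. *)

(* Defs.v *)
From HB Require Import structures.
From mathcomp Require Import all_boot all_order all_algebra.
From mathcomp Require Import all_classical all_reals all_analysis.
Set Implicit Arguments. Unset Strict Implicit. Unset Printing Implicit Defensive.
Import Order.TTheory GRing.Theory Num.Theory.
Local Open Scope classical_set_scope.
Local Open Scope ring_scope.

(* A group G viewed as a DISCRETE group: all subsets are (Borel) measurable. *)
Definition discrete_group (G : groupType) : Type := G.
HB.instance Definition _ (G : groupType) := Choice.on (discrete_group G).
HB.instance Definition _ (G : groupType) :=
  isPointed.Build (discrete_group G) (1%g : G).
HB.instance Definition _ (G : groupType) :=
  @isMeasurable.Build default_measure_display (discrete_group G)
    discrete_measurable discrete_measurable0
    discrete_measurableC discrete_measurableU.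

(* Left Haar measure on the discrete group G: a nonzero measure on all subsets,
   invariant under left translations, finite on compact (= finite) sets. *)
Definition left_Haar (G : groupType) (R : realType)
    (mu : {measure set (discrete_group G) -> \bar R}) : Prop :=
  [/\ (forall (g : G) (A : set (discrete_group G)),
         mu [set (g * x)%g | x in A] = mu A),
      (forall A : set (discrete_group G), finite_set A -> (mu A < +oo)%E)
    & (0 < mu [set: discrete_group G])%E].

Definition wtrans (G : groupType) (R : realType) (a : G) (w : G -> R)
    (f : discrete_group G -> R) : discrete_group G -> R :=
  fun x => w x * f ((a^-1)%g * x)%g.

(* L^p(G,mu): (measurable, automatic here) real functions with finite p-norm. *)
Definition Lp_set (G : groupType) (R : realType)
    (mu : {measure set (discrete_group G) -> \bar R}) (p : R) :
    set (discrete_group G -> R) :=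
  [set f | ('N[mu]_(p%:E)[EFin \o f] < +oo)%E].

Definition Lp_dist (G : groupType) (R : realType)
    (mu : {measure set (discrete_group G) -> \bar R}) (p : R)
    (f g : discrete_group G -> R) : R :=
  fine ('N[mu]_(p%:E)[EFin \o (f \- g)]).

Definition mball (T : Type) (R : realType) (X : set T) (d : T -> T -> R)
    (x : T) (r : R) : set T := [set y | X y /\ d x y < r].

Definition porous_at (T : Type) (R : realType) (X : set T) (d : T -> T -> R)
    (lam : R) (E : set T) (x : T) : Prop :=
  forall delta : R, 0 < delta ->
    exists y, [/\ y \in mball X d x delta, y <> x &
                  mball X d y (lam * d x y) `&` E = set0].

Definition porous (T : Type) (R : realType) (X : set T) (d : T -> T -> R)
    (lam : R) (E : set T) : Prop :=
  E `<=` X /\ forall x, E x -> porous_at X d lam E x.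

Definition sigma_porous (T : Type) (R : realType) (X : set T)
    (d : T -> T -> R) (lam : R) (E : set T) : Prop :=
  exists Es : nat -> set T,
    (forall n, porous X d lam (Es n)) /\ E = \bigcup_n Es n.

Definition is_sigma_porous (T : Type) (R : realType) (X : set T)
    (d : T -> T -> R) (E : set T) : Prop :=
  exists lam : R, 0 < lam < 1 /\ sigma_porous X d lam E.

(* Main.v *)
Require Import Defs.
From HB Require Import structures.
From mathcomp Require Import all_boot all_order all_algebra.
From mathcomp Require Import all_classical all_reals all_analysis.
From mathcomp Require Import measurable_realfun.
From mathcomp Require Import lra.
Import Order.TTheory GRing.Theory Num.Theory.
Import numFieldNormedType.Exports.
Local Open Scope classical_set_scope.
Local Open Scope ring_scope.

Section S.
Context (R : realType) (p : R) (G : groupType)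
  (mu : {measure set (discrete_group G) -> \bar R}).
Hypothesis p1 : 1 <= p.
Hypothesis Haar : left_Haar mu.
Hypothesis mu1 : (1 <= mu [set (1%g : G)])%E.
Local Notation T := (discrete_group G) (only parsing).
Definition Nr (h : T -> R) := ('N[mu]_(p%:E)[EFin \o h])%E.

Lemma p0 : 0 < p. Proof. exact: lt_le_trans p1. Qed.

Lemma mfun_all (D : set T) (f : T -> \bar R) : measurable_fun D f.
Proof. by move=> _ Y _. Qed.

Lemma mu_set1 (t : G) : mu [set (t : T)] = mu [set (1%g : G)].
Proof.
case: Haar => H _ _; rewrite -(H t [set (1%g:G)]); congr (mu _).
by rewrite image_set1 mulg1.
Qed.

Lemma pow_le_inv (a b : \bar R) : (0 <= a)%E -> (0 <= b)%E ->
  (a `^ p <= b `^ p)%E -> (a <= b)%E.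
Proof.
move=> a0 b0 ab.
have ip : 0 <= p^-1 by rewrite invr_ge0 ltW // p0.
have := @gt0_ler_poweR _ p^-1 ip (a `^ p)%E (b `^ p)%E.
rewrite !in_itv /= !poweR_ge0 !leey => /(_ isT isT ab).
by rewrite -!poweRrM mulfV ?gt_eqF ?p0 // !poweRe1.
Qed.

Lemma Nr_pt (h : T -> R) t : ((`|h t|)%:E <= Nr h)%E.
Proof.
apply: pow_le_inv => //; first exact: Lnorm_ge0.
rewrite /Nr poweR_Lnorm ?gt_eqF ?p0 //.
apply: (@le_trans _ _ (\int[mu]_(x in [set t]) (`|(EFin \o h) x| `^ p))%E).
  have -> : (\int[mu]_(x in [set t]) (`|(EFin \o h) x| `^ p))%E =
     (\int[mu]_(x in [set t]) (cst ((`|h t|)%:E `^ p)%E) x)%E.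
    by apply: eq_integral => x; rewrite inE /= => ->.
  rewrite integral_cst // mu_set1.
  by apply: lee_pemulr => //; exact: poweR_ge0.
apply: (ge0_subset_integral mu) => //.
by move=> x _; exact: poweR_ge0.
Qed.

Local Notation X := (Lp_set mu p).
Local Notation d := (Lp_dist mu p).

Lemma mfunR (f : T -> R) : measurable_fun [set: T] f.
Proof. by move=> _ Y _. Qed.

Lemma Nr_ge0 (h : T -> R) : (0 <= Nr h)%E.
Proof. exact: Lnorm_ge0. Qed.

Lemma Nr_fin (h : T -> R) : (Nr h < +oo)%E -> Nr h \is a fin_num.
Proof. by move=> H; rewrite ge0_fin_numE ?Nr_ge0. Qed.

Lemma Nr_tri (f g h : T -> R) :
  (Nr (f \- h)%R <= Nr (f \- g)%R + Nr (g \- h)%R)%E.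
Proof.
have -> : Nr (f \- h)%R = Nr ((f \- g) \+ (g \- h))%R.
  rewrite /Nr; by apply: eq_Lnorm => x /=; congr EFin; rewrite addrA subrK.
by rewrite /Nr; apply: minkowski_EFin => //; exact: mfunR.
Qed.

Lemma Nr_sym (f g : T -> R) : Nr (f \- g) = Nr (g \- f).
Proof.
rewrite /Nr -oppe_Lnorm; apply: eq_Lnorm => x /=.
by rewrite opprB.
Qed.

Lemma Nr_opp (f : T -> R) : Nr (\- f) = Nr f.
Proof.
rewrite /Nr -oppe_Lnorm; apply: eq_Lnorm => x /=.
by rewrite opprK.
Qed.

Lemma Nr_sub_lt (f g : T -> R) : X f -> X g -> (Nr (f \- g)%R < +oo)%E.
Proof.
rewrite /Lp_set /= => Xf Xg.
have -> : Nr (f \- g)%R = Nr (f \+ (\- g))%R by [].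
apply: le_lt_trans; first by rewrite /Nr; apply: minkowski_EFin => //; exact: mfunR.
by rewrite lte_add_pinfty // -/(Nr _) Nr_opp.
Qed.

Lemma dE (f g : T -> R) : X f -> X g -> (d f g)%:E = Nr (f \- g).
Proof. by move=> Xf Xg; rewrite /Lp_dist fineK // Nr_fin // Nr_sub_lt. Qed.

Lemma d_ge0 (f g : T -> R) : 0 <= d f g.
Proof. exact/fine_ge0/Nr_ge0. Qed.

Lemma d_sym (f g : T -> R) : d f g = d g f.
Proof. by rewrite /Lp_dist; have := Nr_sym f g; rewrite /Nr => ->. Qed.

Lemma d_tri (f g h : T -> R) : X f -> X g -> X h -> d f h <= d f g + d g h.
Proof.
move=> Xf Xg Xh; rewrite -lee_fin EFinD !dE //; exact: Nr_tri.
Qed.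

Lemma d_pt (f g : T -> R) t : X f -> X g -> `|f t - g t| <= d f g.
Proof. by move=> Xf Xg; rewrite -lee_fin dE //; exact: (Nr_pt (f \- g)). Qed.

Lemma d_self (f : T -> R) : d f f = 0.
Proof.
have E : ('N[mu]_(p%:E)[EFin \o (f \- f)%R] = 'N[mu]_(p%:E)[cst 0])%E.
  by apply: eq_Lnorm => x /=; rewrite subrr.
by rewrite /Lp_dist E Lnorm0 // eqe gt_eqF // p0.
Qed.

Lemma d_eq0 (f g : T -> R) : X f -> X g -> d f g = 0 -> f = g.
Proof.
move=> Xf Xg H; apply/funext => t; apply/eqP; rewrite -subr_eq0 -normr_le0.
by rewrite -H d_pt.
Qed.

Lemma step (lam : R) (E : set (T -> R)) : 0 < lam -> porous X d lam E ->
  forall z r, X z -> 0 < r -> exists z' r', [/\ X z', 0 < r', r' <= r / 4,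
    d z z' <= r / 2 & forall u, X u -> d z' u <= r' -> ~ E u].
Proof.
move=> l0 [EX Ep] z r Xz r0.
case: (pselect (exists x, E x /\ d z x < r / 4)) => [[x [Ex dzx]]|nE].
- have Xx := EX x Ex.
  have r4 : 0 < r / 4 by lra.
  have [y [yB yx yH]] := Ep x Ex (r / 4) r4.
  move: yB; rewrite inE => -[Xy dxy].
  have s0 : 0 < d x y.
    rewrite lt_neqAle d_ge0 andbT; apply/eqP => /esym/(d_eq0 x y Xx Xy) e.
    by apply: yx; rewrite e.
  have ls0 : 0 < lam * d x y by rewrite mulr_gt0.
  exists y, (Num.min (lam * d x y / 2) (r / 4)); split => //.
  + by rewrite lt_min r4 andbT; lra.
  + by rewrite ge_min lexx orbT.
  + have := d_tri z x y Xz Xx Xy; lra.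
  + move=> u Xu du Eu.
    have : (mball X d y (lam * d x y) `&` E) u.
      split => //; split => //.
      apply: (le_lt_trans du); rewrite gt_min; apply/orP; left.
      lra.
    by rewrite yH.
- have r8 : 0 < r / 8 by lra.
  exists z, (r / 8); split => //.
  + lra.
  + rewrite d_self; lra.
  + move=> u Xu du Eu; apply: nE; exists u; split => //; lra.
Qed.

Lemma iter_wtrans (a : G) (w : G -> R) (g : T -> R) m (t : G) :
  iter m (wtrans a w) g ((a ^+ m) * t)%g =
  (\prod_(1 <= k < m.+1) w ((a ^+ k) * t)%g) * g t.
Proof.
elim: m => [|m IH].
  by rewrite /= big_geq // mul1r expg0 mul1g.
rewrite iterS /wtrans [in RHS]big_nat_recr //= expgS -mulgA mulKg IH.
by rewrite mulrCA mulrA.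
Qed.

Lemma pow_inv_pow (x : \bar R) : (0 <= x)%E -> ((x `^ p^-1) `^ p = x)%E.
Proof. by move=> x0; rewrite -poweRrM mulVf ?gt_eqF ?p0 // poweRe1. Qed.

Lemma interior (a : G) (w : G -> R) (gamma : nat -> nat) (F : set T) (N : nat) :
 (forall x, 0 < w x) ->
 (forall n, (N <= n)%N -> [set ((a ^+ gamma n) * t)%g | t in F] `&` F = set0) ->
 0 < inf [set b : R | exists n t, [/\ (N <= n)%N, F t &
                 b = \prod_(1 <= k < (gamma n).+1) w ((a ^+ k) * t)%g]] ->
 forall g, X g -> (forall t, F t -> (inf [set b : R | exists n t, [/\ (N <= n)%N, F t &
                 b = \prod_(1 <= k < (gamma n).+1) w ((a ^+ k) * t)%g]])^-1 + 1/2 <= `|g t|) ->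
 forall n, (N <= n)%N ->
   ((mu F) `^ p^-1 <= Nr (iter (gamma n) (wtrans a w) g \- \1_F)%R)%E.
Proof.
set S := [set b : R | _].
move=> w0 disj b0 g Xg gF n Nn.
have lbS : lbound S (inf S).
  apply: ge_inf; exists 0 => _ [m [t [_ _ ->]]].
  by apply: prodr_ge0 => i _; exact: ltW.
apply: pow_le_inv; [exact: poweR_ge0 | exact: Nr_ge0 |].
rewrite pow_inv_pow // /Nr poweR_Lnorm ?gt_eqF ?p0 //.
set A := [set ((a ^+ gamma n) * t)%g | t in F].
have -> : mu F = mu A by case: Haar => H _ _; rewrite H.
apply: (@le_trans _ _ (\int[mu]_(x in A) (`|(EFin \o (iter (gamma n) (wtrans a w) g \- \1_F)%R) x| `^ p))%E); last first.
  apply: (ge0_subset_integral mu) => //.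
  by move=> x _; exact: poweR_ge0.
rewrite -[X in (X <= _)%E]mul1e -integral_cst //.
apply: ge0_le_integral => //.
move=> _ [t Ft <-] /=.
have nF : ~ F ((a ^+ gamma n) * t)%g.
  move=> H; have : (A `&` F) ((a ^+ gamma n) * t)%g by split => //; exists t.
  by rewrite disj.
rewrite indicE memNset // subr0 iter_wtrans.
set P := \prod_(_ <= _ < _) _.
have PS : inf S <= P by apply: lbS; exists n, t; split.
have P0 : 0 < P by exact: lt_le_trans b0 PS.
have gt := gF t Ft.
have H1 : 1 <= `|P * g t|.
  rewrite normrM (gtr0_norm P0).
  have ib : inf S * (inf S)^-1 = 1 by rewrite mulfV ?gt_eqF.
  move: gt ib PS b0; set bi := (inf S)^-1; set u := `|g t|; set b := inf S => gt ib PS b0.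
  have bi0 : 0 < bi by rewrite invr_gt0.
  have u0 : 0 <= u by rewrite normr_ge0.
  have : b * (bi + 1/2) <= P * u by apply: ler_pM => //; lra.
  nra.
rewrite lee_fin; have := @ge0_ler_powR _ p (ltW p0) 1 `|P * g t|.
rewrite !nnegrE ler01 normr_ge0 => /(_ isT isT H1).
by rewrite powR1.
Qed.

Lemma Xf0 (F : set T) (K : R) : finite_set F -> X (fun x => K * \1_F x).
Proof.
move=> fF; rewrite /Lp_set /=.
apply: (@lty_poweRy _ _ p); first by rewrite gt_eqF ?p0.
rewrite poweR_Lnorm ?gt_eqF ?p0 //.
have -> : (\int[mu]_x (`|(EFin \o (fun x => K * \1_F x)%R) x| `^ p))%E =
   (\int[mu]_x ((`|K| `^ p) * \1_F x)%R%:E)%E.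
  apply: eq_integral => x _ /=; congr EFin.
  rewrite indicE; case: (x \in F); rewrite ?mulr1 ?mulr0 ?normr0 ?powR0 //.
  by rewrite gt_eqF ?p0.
rewrite (@integralZl_indic _ _ _ _ _ _ (fun _ => F)) //; last first.
  by move=> H; exfalso; move: H; rewrite ltNge powR_ge0.
rewrite integral_indic // setIT.
case: Haar => _ Hf _.
apply: lte_mul_pinfty => //.
exact: Hf.
Qed.

Lemma powR_cont (c : R) : 0 < c -> {for c, continuous (fun y : R => y `^ p)}.
Proof.
move=> c0; apply: differentiable_continuous; apply/derivable1_diffP.
by apply: derivable_powR; rewrite in_itv /= andbT.
Qed.

Lemma pt_liminf (y : nat -> R) (l w : R) : y @ \oo --> l ->
  (((`|l - w| `^ p)%:E <= limn_einf (fun j => (`|y j - w| `^ p)%:E)))%E.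
Proof.
move=> yl.
have bl : (fun j => `|y j - w|) @ \oo --> `|l - w|.
  by apply: cvg_norm; apply: cvgB => //; exact: cvg_cst.
have [c0|] := eqVneq `|l - w| 0.
  rewrite c0 powR0 ?gt_eqF ?p0 // limn_einf_lim.
  apply: lime_ge; first exact: is_cvg_einfs.
  apply: nearW => n; apply: le_ereal_inf_tmp => _ [m /= nm <-].
  by rewrite lee_fin powR_ge0.
move=> cn0; have c0 : 0 < `|l - w| by rewrite lt_neqAle eq_sym cn0 normr_ge0.
have : (fun j => (`|y j - w| `^ p)%:E) @ \oo --> (`|l - w| `^ p)%:E.
  apply: cvg_EFin; first exact: nearW.
  have H := @continuous_cvg _ _ _ _ _ _ _ _ (powR_cont _ c0) bl.
  rewrite (_ : fine \o _ = (fun y => y `^ p) \o (fun j => `|y j - w|)) //.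
  exact: H.
by move=> H2; have [-> _] := cvg_limn_einf_sup H2.
Qed.

Lemma NrpE (h : T -> R) : (Nr h `^ p = \int[mu]_t (`|h t| `^ p)%:E)%E.
Proof.
rewrite /Nr poweR_Lnorm ?gt_eqF ?p0 //.
Qed.

Lemma fatou_est (z : nat -> (T -> R)) (x : T -> R) (k : nat) (rho : R) :
  (forall t, (fun j => z j t) @ \oo --> x t) ->
  (forall j, (k <= j)%N -> (Nr (z j \- z k)%R <= rho%:E)%E) ->
  (Nr (x \- z k)%R <= rho%:E)%E.
Proof.
move=> zx Hz.
have r0 : (0 <= rho%:E)%E by apply: le_trans (Hz k (leqnn k)); exact: Nr_ge0.
apply: pow_le_inv => //; first exact: Nr_ge0.
rewrite NrpE.
pose v := fun j t => (`|z j t - z k t| `^ p)%:E.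
apply: (@le_trans _ _ (\int[mu]_t limn_einf (v^~ t))%E).
  apply: ge0_le_integral => //.
  - by move=> t _; exact: pt_liminf (zx t).
apply: le_trans; first apply: (fatou mu measurableT) => //.
  by move=> n t _; rewrite lee_fin powR_ge0.
rewrite limn_einf_lim; apply: lime_le; first exact: is_cvg_einfs.
exists k => // n /= kn.
apply: le_trans; first apply: (@ereal_inf_lbound _ _ (\int[mu]_t v n t)%E).
  by exists n => //=.
rewrite /v -NrpE.
have := @gt0_ler_poweR _ p (ltW p0) (Nr (z n \- z k)%R) (rho%:E).
rewrite !in_itv /= Nr_ge0 r0 !leey; apply => //.
exact: Hz.
Qed.

Lemma baire (lam : R) (Es : nat -> set (T -> R)) (f0 : T -> R) (r : R) :
  0 < lam -> (forall n, porous X d lam (Es n)) -> X f0 -> 0 < r ->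
  (forall u, X u -> d f0 u < r -> exists n, Es n u) -> False.
Proof.
move=> l0 Ep Xf0 r0 cov.
have st : forall nzr : nat * ((T -> R) * R), exists zr : (T -> R) * R,
  X nzr.2.1 -> 0 < nzr.2.2 -> [/\ X zr.1, 0 < zr.2, zr.2 <= nzr.2.2 / 4,
    d nzr.2.1 zr.1 <= nzr.2.2 / 2 & forall u, X u -> d zr.1 u <= zr.2 -> ~ Es nzr.1 u].
  move=> [n [z rr]] /=.
  case: (pselect (X z /\ 0 < rr)) => [[Xz rr0]|nh].
    have [z' [r' H]] := step _ _ l0 (Ep n) _ _ Xz rr0.
    by exists (z', r').
  by exists (z, rr) => Xz rr0; exfalso; apply: nh.
have [nxt Hn] := choice st.
pose s := fix s k := if k is k'.+1 then nxt (k', s k') else (f0, r / 2).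
have sS k : s k.+1 = nxt (k, s k) by [].
have I1 : forall k, X (s k).1 /\ 0 < (s k).2.
  elim=> [|k [Xk rk]]; first by split => //=; lra.
  by rewrite sS; have [] := Hn (k, s k) Xk rk.
have I2 k : [/\ (s k.+1).2 <= (s k).2 / 4, d (s k).1 (s k.+1).1 <= (s k).2 / 2 &
   forall u, X u -> d (s k.+1).1 u <= (s k.+1).2 -> ~ Es k u].
  have [Xk rk] := I1 k.
  by have [_ _ h1 h2 h3] := Hn (k, s k) Xk rk; rewrite sS; split.
have nest1 k u : X u -> d (s k.+1).1 u <= (s k.+1).2 -> d (s k).1 u <= (s k).2.
  move=> Xu du; have [h1 h2 _] := I2 k; have [Xk rk] := I1 k; have [Xk1 _] := I1 k.+1.
  have := d_tri _ _ _ Xk Xk1 Xu; lra.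
have nest m k u : X u -> d (s (m + k)%N).1 u <= (s (m + k)%N).2 -> d (s k).1 u <= (s k).2.
  elim: m => [//|m IH] Xu du; apply: IH => //; apply: nest1 => //.
have dz k j : (k <= j)%N -> d (s k).1 (s j).1 <= (s k).2.
  move=> kj; rewrite -(subnK kj); apply: (nest (j - k)%N); first exact: (I1 _).1.
  by rewrite d_self; exact: ltW (I1 _).2.
have dec k : (s k).2 * (k%:R + 1) <= r / 2.
  elim: k => [|k IH]; first by rewrite /= add0r mulr1.
  have [h1 _ _] := I2 k; have a0 := (I1 k).2; have a1 := (I1 k.+1).2.
  have K0 : 0 <= k%:R :> R by [].
  rewrite -natr1; move: IH h1 a0 a1 K0; set a := (s k).2; set a' := (s k.+1).2.
  set K := k%:R; move=> IH h1 a0 a1 K0.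
  nra.
have cv t : cvg ((fun j => (s j).1 t) @ \oo).
  apply/cauchy_cvgP; apply: cauchy_exP => e e0.
  have q0 : 0 <= r / 2 / e by rewrite divr_ge0 // ?ltW //; lra.
  have := archi_boundP q0; set K := Num.Def.archi_bound _ => HK.
  exists ((s K).1 t); exists K => // j /= Kj.
  rewrite /ball /=.
  have [XK rK] := I1 K; have [Xj _] := I1 j.
  apply: le_lt_trans; first exact: (d_pt _ _ t XK Xj).
  apply: le_lt_trans; first exact: (dz _ _ Kj).
  have := dec K; move: HK; rewrite ltr_pdivrMr // => HK.
  have K0 : 0 <= K%:R :> R by [].
  move: rK; set a := (s K).2; set KK := K%:R => rK h.
  nra.
pose xi t := lim ((fun j => (s j).1 t) @ \oo).
have zx t : (fun j => (s j).1 t) @ \oo --> xi t := cv t.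
have Nk k : (Nr (xi \- (s k).1)%R <= ((s k).2)%:E)%E.
  apply: (fatou_est (fun j => (s j).1)) => // j kj.
  have [Xk _] := I1 k; have [Xj _] := I1 j.
  by rewrite Nr_sym -dE // lee_fin; exact: dz.
have Xxi : X xi.
  rewrite /Lp_set /=.
  have E0 (h : T -> R) : Nr (h \- cst 0)%R = Nr h.
    by rewrite /Nr; apply: eq_Lnorm => x /=; rewrite subr0.
  have := Nr_tri xi f0 (cst 0); rewrite !E0 => H.
  apply: le_lt_trans H _; rewrite lte_add_pinfty //.
  exact: le_lt_trans (Nk 0%N) (ltey _).
have dk k : d (s k).1 xi <= (s k).2.
  have [Xk _] := I1 k; rewrite -lee_fin dE // Nr_sym; exact: Nk.
have [n En] : exists n, Es n xi.
  apply: cov => //; apply: le_lt_trans (dk 0%N) _ => /=; lra.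
by have [_ _ h3] := I2 n; apply: (h3 xi Xxi (dk n.+1)).
Qed.
End S.
Theorem mainTheorem6 (R : realType) (p : R) (G : groupType) (a : G)
    (mu : {measure set (discrete_group G) -> \bar R})
    (gamma : nat -> nat) (w : G -> R)
    (F : set (discrete_group G)) (N : nat) :
  1 <= p ->
  left_Haar mu ->
  (1 <= mu [set (1%g : G)])%E ->
  (forall M : nat, exists n, (M <= gamma n)%N) ->
  (forall x, 0 < w x) ->
  (exists M : R, forall x, w x <= M) ->
  finite_set F -> F !=set0 ->
  (0 < N)%N ->
  (forall n, (N <= n)%N -> [set ((a ^+ gamma n) * t)%g | t in F] `&` F = set0) ->
  0 < inf [set b : R | exists n t, [/\ (N <= n)%N, F t &
                 b = \prod_(1 <= k < (gamma n).+1) w ((a ^+ k) * t)%g]] ->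
  ~ is_sigma_porous (Lp_set mu p) (Lp_dist mu p)
      [set f | Lp_set mu p f /\
         forall n, (N <= n)%N ->
           ('N[mu]_(p%:E)[EFin \o (iter (gamma n) (wtrans a w) f \- (\1_F : discrete_group G -> R))%R]
              >= (mu F) `^ p^-1)%E].
Proof.
move=> p1 Haar mu1 unb w0 wb fF F0 N0 disj b0 [lam [/andP[l0 l1] [Es [Ep EE]]]].
set S := [set b : R | _] in b0.
pose K := (inf S)^-1 + 1.
pose f0 := fun x : discrete_group G => K * \1_F x.
have Xf : Lp_set mu p f0 by exact: (@Xf0 _ _ _ _ p1 Haar F K fF).
apply: (@baire _ _ _ _ p1 Haar mu1 lam Es f0 (1/2) l0 Ep Xf); first lra.
move=> u Xu du.
have : (\bigcup_n Es n) u.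
  rewrite -EE; split => // n Nn.
  apply: (@interior _ _ _ _ p1 Haar a w gamma F N w0 disj b0 u Xu) => // t Ft.
  have := @d_pt _ _ _ _ p1 Haar mu1 _ _ t Xf Xu.
  rewrite /f0 indicE mem_set // mulr1 => h.
  have h2 : `|K - u t| < 1/2 by exact: le_lt_trans h du.
  move: h2; rewrite ltr_norml => /andP[h3 h4].
  have : (inf S)^-1 + 1/2 <= u t by rewrite /K in h4; lra.
  move=> h5; apply: (le_trans h5); exact: ler_norm.
by case=> n _ Enu; exists n.
Qed.
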